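(* Let $m,p\ge1$, let $\mathbf{X}=(X_1,\dots,X_p)$ take values in $\mathbb{X}^p$ with $|\mathbb{X}|=m$, and $Y$ in $\{0,1\}$, so that joint distributions of $(\mathbf{X},Y)$ are identified with probability vectors $\mathbf{p}\in\mathbb{R}_+^{2m^p}$, $\mathbf{1}^T\mathbf{p}=1$. Let $\tilde{\mathbf{p}}$ be the uniform probability vector. Then there exists $\epsilon>0$ such that for every probability vector $\mathbf{p}$ with $\|\mathbf{p}-\tilde{\mathbf{p}}\|_1<\epsilon$, the class $\mathcal{C}(\mathbf{p})$ contains a distribution $\hat{\mathbb{P}}$ for which there exist functions $f_i:\mathbb{X}\to\mathbb{R}$, $i=1,\dots,p$, with $\mathbb{E}_{\hat{\mathbb{P}}}[Y\mid\mathbf{X}]=\sum_{i=1}^p f_i(X_i)$.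
   Context: For a probability vector $\mathbf{p}$, $\mathcal{C}(\mathbf{p})$ denotes the class of all joint distributions of $(\mathbf{X},Y)$ having the same pairwise marginals as $\mathbf{p}$, i.e. the same values of $\mathbb{P}(X_i=x_i,X_j=x_j)$ and $\mathbb{P}(X_i=x_i,Y=y)$ for all $i,j\in\{1,\dots,p\}$, $x_i,x_j\in\mathbb{X}$, $y\in\{0,1\}$. *)

(* Defs.v *)
From HB Require Import structures.
From mathcomp Require Import all_boot all_order all_algebra.
From mathcomp Require Import reals.
Set Implicit Arguments. Unset Strict Implicit. Unset Printing Implicit Defensive.
Import Order.TTheory GRing.Theory Num.Theory.
Local Open Scope ring_scope.

(* Outcomes of (X, Y): X = (X_1..X_p) in 'I_m ^ p, Y in bool (false = 0, true = 1). *)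
Definition outcome (m p : nat) : finType := ({ffun 'I_p -> 'I_m} * bool)%type.

Section Defs.
Variables (R : realType) (m p : nat).
Local Notation T := (outcome m p).

Definition is_prob (P : {ffun T -> R}) : Prop :=
  (forall t, 0 <= P t) /\ \sum_t P t = 1.

Definition unif_prob : {ffun T -> R} := [ffun _ => (#|T|%:R)^-1].

Definition l1dist (P Q : {ffun T -> R}) : R := \sum_t `|P t - Q t|.

Definition margXX (P : {ffun T -> R}) (i j : 'I_p) (a b : 'I_m) : R :=
  \sum_(t : T | (t.1 i == a) && (t.1 j == b)) P t.

Definition margXY (P : {ffun T -> R}) (i : 'I_p) (a : 'I_m) (y : bool) : R :=
  \sum_(t : T | (t.1 i == a) && (t.2 == y)) P t.

Definition same_pairwise (P Q : {ffun T -> R}) : Prop :=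
  (forall i j a b, margXX Q i j a b = margXX P i j a b) /\
  (forall i a y, margXY Q i a y = margXY P i a y).

Definition classC (P Q : {ffun T -> R}) : Prop := is_prob Q /\ same_pairwise P Q.

Definition margX (P : {ffun T -> R}) (x : {ffun 'I_p -> 'I_m}) : R :=
  P (x, false) + P (x, true).

(* E_P[Y | X] = sum_i f_i(X_i) (P-almost surely, i.e. on every x with P(X=x) > 0);
   E_P[Y | X = x] = P(X = x, Y = 1) / P(X = x). *)
Definition additive_condexp (P : {ffun T -> R}) : Prop :=
  exists f : 'I_p -> 'I_m -> R,
    forall x : {ffun 'I_p -> 'I_m}, 0 < margX P x ->
      P (x, true) / margX P x = \sum_(i < p) f i (x i).
End Defs.

(* Main.v *)
Require Import Defs.
From HB Require Import structures.
From mathcomp Require Import all_boot all_order all_algebra.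
From mathcomp Require Import reals ring lra.
Import Order.TTheory GRing.Theory Num.Theory.
Local Open Scope ring_scope.

Lemma normal_eq_ord (R : realType) (nK nX : nat) (B : 'M[R]_(nK, nX))
  (w q : 'I_nX -> R) : (forall j, 0 < w j) ->
  exists F : 'rV[R]_nK, forall k,
    \sum_l F 0 l * (\sum_j B l j * w j * B k j) = \sum_j q j * B k j.
Proof.
move=> wpos.
pose G : 'M[R]_nK := \matrix_(l, k) \sum_j B l j * w j * B k j.
pose u : 'rV[R]_nK := \row_k \sum_j q j * B k j.
have uG : (u <= G)%MS.
  rewrite submxE; apply/eqP/matrixP => i0 j'.
  set c := cokermx G.
  have Gc : G *m c = 0 by apply: mulmx_coker.
  pose s j := \sum_l c l j' * B l j.
  have E1 : \sum_l c l j' * (G *m c) l j' =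
     \sum_l \sum_k \sum_j c l j' * B l j * w j * B k j * c k j'.
    apply: eq_bigr => l _; rewrite !mxE mulr_sumr; apply: eq_bigr => k _.
    rewrite !mxE mulr_suml mulr_sumr; apply: eq_bigr => j _; rewrite !mulrA.
    done.
  have E2 : \sum_j w j * s j ^+ 2 =
     \sum_l \sum_k \sum_j c l j' * B l j * w j * B k j * c k j'.
    transitivity (\sum_j \sum_l \sum_k c l j' * B l j * w j * B k j * c k j').
      apply: eq_bigr => j _; rewrite expr2 /s mulr_suml mulr_sumr.
      apply: eq_bigr => l _; rewrite mulr_sumr mulr_sumr; apply: eq_bigr => k _.
      ring.
    rewrite exchange_big /=; apply: eq_bigr => l _; rewrite exchange_big /=.
    done.
  have H0 : \sum_j w j * s j ^+ 2 = 0.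
    by rewrite E2 -E1 Gc; apply: big1 => l _; rewrite [X in _ * X]mxE mulr0.
  have s0 : forall j, s j = 0.
    move=> j; have /eqP : w j * s j ^+ 2 = 0.
      apply: (psumr_eq0P _ H0) => // i _.
      exact: mulr_ge0 (ltW (wpos i)) (sqr_ge0 (s i)).
    move=> h; apply/eqP; move: h. 
    have wj0 : (w j == 0) = false by rewrite gt_eqF.

    by rewrite mulf_eq0 wj0 sqrf_eq0.
  rewrite !mxE.
  transitivity (\sum_j q j * s j); last by rewrite big1 // => j _; rewrite s0 mulr0.
  under eq_bigr => k _ do rewrite mxE mulr_suml.
  rewrite exchange_big /=; apply: eq_bigr => j _; rewrite /s mulr_sumr.
  by apply: eq_bigr => l _; ring.
exists (u *m pinvmx G) => k.
have /matrixP /(_ 0 k) := mulmxKpV uG; rewrite !mxE => <-.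
by apply: eq_bigr => l _; congr (_ * _); rewrite mxE.
Qed.

Lemma sum_enum (R : realType) (X : finType) (F : X -> R) :
  \sum_(x : X) F x = \sum_(j < #|X|) F (enum_val j).
Proof. by rewrite -(big_enum_val (A := X)); apply: eq_bigl. Qed.

Lemma normal_eq (R : realType) (K X : finType) (phi : K -> X -> R) (w q : X -> R) :
  (forall x, 0 < w x) -> exists f : K -> R, forall k,
  \sum_x phi k x * (w x * \sum_l f l * phi l x) = \sum_x phi k x * q x.
Proof.
move=> wpos.
pose B : 'M[R]_(#|K|, #|X|) := \matrix_(i, j) phi (enum_val i) (enum_val j).
have [F HF] := @normal_eq_ord R _ _ B (fun j => w (enum_val j)) (fun j => q (enum_val j)) (fun j => wpos _).
exists (fun l => F 0 (enum_rank l)) => k.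
have := HF (enum_rank k).
have -> : \sum_x phi k x * q x = \sum_j q (enum_val j) * B (enum_rank k) j.
  by rewrite (@sum_enum R X); apply: eq_bigr => j _; rewrite mxE enum_rankK mulrC.
move=> <-.
rewrite (@sum_enum R X).
under eq_bigr => j _ do rewrite (@sum_enum R K) mulr_sumr mulr_sumr.
rewrite exchange_big /=; apply: eq_bigr => l _.
rewrite mulr_sumr; apply: eq_bigr => j _.
rewrite !mxE enum_rankK enum_valK; ring.
Qed.



Lemma sum_expand (R : realType) (m p : nat) (h : 'I_p * 'I_m -> R) (x : {ffun 'I_p -> 'I_m}) :
  \sum_(l : 'I_p * 'I_m) h l * (x l.1 == l.2)%:R = \sum_(i < p) h (i, x i).
Proof.
transitivity (\sum_(i < p) \sum_(a < m) h (i, a) * (x i == a)%:R).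
  by rewrite pair_bigA; apply: eq_bigr => -[i a] _.
apply: eq_bigr => i _; rewrite (bigD1 (x i)) //= eqxx mulr1 big1 ?addr0 //.
by move=> a; rewrite eq_sym => /negbTE ->; rewrite mulr0.
Qed.

Lemma sum_pairC (R : realType) (m p : nat) (F : outcome m p -> R) (C : pred {ffun 'I_p -> 'I_m}) :
  \sum_(t : outcome m p | C t.1) F t = \sum_(x | C x) (F (x, true) + F (x, false)).
Proof.
transitivity (\sum_(x | C x) \sum_(b : bool) F (x, b)); last first.
  by apply: eq_bigr => x _; rewrite big_bool.
rewrite pair_big /=; apply: eq_big => [[x b]|[x b] _] //=; by rewrite andbT.
Qed.

Lemma sum_pairY (R : realType) (m p : nat) (F : outcome m p -> R) (C : pred {ffun 'I_p -> 'I_m}) y :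
  \sum_(t : outcome m p | C t.1 && (t.2 == y)) F t = \sum_(x | C x) F (x, y).
Proof.
transitivity (\sum_(x | C x) \sum_(b : bool | b == y) F (x, b)); last first.
  by apply: eq_bigr => x _; rewrite big_pred1_eq.
rewrite pair_big /=; apply: eq_big => [[x b]|[x b] _] //=.
Qed.

Lemma sum_ind (R : realType) (X : finType) (C : pred X) (F : X -> R) :
  \sum_x (C x)%:R * F x = \sum_(x | C x) F x.
Proof.
rewrite [RHS]big_mkcond; apply: eq_bigr => x _.
by case: (C x); rewrite ?mul1r ?mul0r.
Qed.

Theorem theorem5 (R : realType) (m p : nat) (hm : (1 <= m)%N) (hp : (1 <= p)%N) :
  exists eps : R, 0 < eps /\
    forall P : {ffun outcome m p -> R},
      is_prob P -> l1dist P (unif_prob R m p) < eps ->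
      exists Q : {ffun outcome m p -> R}, classC P Q /\ additive_condexp Q.
Proof.
pose X := {ffun 'I_p -> 'I_m}.
have cardT : #|outcome m p| = (#|X| * 2)%N by rewrite /outcome card_prod card_bool.
have X0 : (0 < #|X|)%N by apply/card_gt0P; exists [ffun => Ordinal hm].
pose Mr : R := #|X|%:R.
have Mr1 : 1 <= Mr by rewrite /Mr ler1n.
have Mr0 : Mr != 0 by apply: lt0r_neq0; lra.
pose u : R := (#|outcome m p|%:R)^-1.
have uE : u * (2 * Mr) = 1.
  have : (#|X|%:R : R) != 0 by rewrite pnatr_eq0 -lt0n.
  by rewrite /u cardT natrM /Mr => hX; field.
have u0 : 0 < u.
  by rewrite /u invr_gt0 ltr0n cardT muln_gt0 X0.
exists (u / (2 * Mr)); split.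
  by apply: divr_gt0 => //; lra.
move=> P [P0 P1] hd.
set eps := u / (2 * Mr).
have epsu : eps * (2 * Mr) = u.
  by rewrite /eps; field.
have eps0 : 0 < eps by rewrite /eps; apply: divr_gt0 => //; lra.
have epsle : 2 * eps <= u by rewrite -epsu; nra.
have hPt : forall t, `|P t - u| < eps.
  move=> t; apply: le_lt_trans hd; rewrite /l1dist (bigD1 t) //= ffunE -/u.
  by rewrite lerDl; apply: sumr_ge0 => *; exact: normr_ge0.
pose w (x : X) := P (x, false) + P (x, true).
pose q (x : X) := P (x, true).
have hw : forall x, u <= w x.
  move=> x; have := hPt (x, false); have := hPt (x, true).
  rewrite !ltr_norml => /andP [h1 h2] /andP [h3 h4]; rewrite /w; lra.
have hwpos : forall x, 0 < w x by move=> x; apply: lt_le_trans (hw x).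
have hr : forall x, (q x - w x / 2) ^+ 2 <= eps ^+ 2.
  move=> x; have := hPt (x, false); have := hPt (x, true).
  rewrite !ltr_norml => /andP [h1 h2] /andP [h3 h4]; rewrite /w /q.
  have a1 : - eps <= P (x, true) - (P (x, false) + P (x, true)) / 2 by lra.
  have a2 : P (x, true) - (P (x, false) + P (x, true)) / 2 <= eps by lra.
  nra.
have [f hf] := @normal_eq R ('I_p * 'I_m)%type X (fun (k : 'I_p * 'I_m) (x : X) => ((x k.1 == k.2)%:R : R)) w q hwpos.
pose g (x : X) := \sum_(i < p) f (i, x i).
have hf' : forall k : 'I_p * 'I_m,
    \sum_(x : X) (x k.1 == k.2)%:R * (w x * g x) = \sum_(x : X) (x k.1 == k.2)%:R * q x.
  move=> k; rewrite -hf; apply: eq_bigr => x _ /=.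
  by rewrite /g (@sum_expand R m p f x).
pose i0 : 'I_p := Ordinal hp.
pose e (x : X) := g x - 2^-1.
have he : forall x : X, e x = \sum_(l : 'I_p * 'I_m) (f l - (l.1 == i0)%:R * 2^-1) * (x l.1 == l.2)%:R.
  move=> x; rewrite (@sum_expand R m p _ x) /e /g sumrB; congr (_ - _).
  rewrite (bigD1 i0) //= ?eqxx mul1r big1 ?addr0 // => i /negbTE ->.
  by rewrite mul0r.
have key : \sum_(x : X) e x * (w x * g x - q x) = 0.
  under eq_bigr => x _ do rewrite he mulr_suml.
  rewrite exchange_big /=; apply: big1 => l _.
  transitivity ((f l - (l.1 == i0)%:R * 2^-1) *
     (\sum_(x : X) (x l.1 == l.2)%:R * (w x * g x) - \sum_(x : X) (x l.1 == l.2)%:R * q x)).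
    by rewrite -sumrB mulr_sumr; apply: eq_bigr => x _; ring.
  by rewrite hf' subrr mulr0.
pose r (x : X) := q x - w x / 2.
have S_eq : \sum_(x : X) w x * e x ^+ 2 = \sum_(x : X) e x * r x.
  have H : \sum_(x : X) (w x * e x ^+ 2 - e x * r x) = \sum_(x : X) e x * (w x * g x - q x).
    by apply: eq_bigr => x _; rewrite /e /r; ring.
  by apply/eqP; rewrite -subr_eq0 -sumrB H key.
set S := \sum_(x : X) w x * e x ^+ 2.
have hS : u * S <= Mr * eps ^+ 2.
  have step : forall x, u * (e x * r x) <= (u * (w x * e x ^+ 2) + eps ^+ 2) / 2.
    move=> x; have h1 := hr x; have h2 := hw x.
    have h3 : 0 <= (u * e x - r x) ^+ 2 by apply: sqr_ge0.
    have h4 : 0 <= (w x - u) * (u * e x ^+ 2).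
      by apply: mulr_ge0; [lra | apply: mulr_ge0; [lra | apply: sqr_ge0]].
    rewrite /r in h1 h3 *; nra.
  have : u * S <= \sum_(x : X) (u * (w x * e x ^+ 2) + eps ^+ 2) / 2.
    by rewrite /S S_eq mulr_sumr; apply: ler_sum => x _; apply: step.
  rewrite -mulr_suml big_split /= -mulr_sumr sumr_const -/S.
  rewrite -mulr_natr (_ : #|xpredT| = #|X|) //; rewrite -/Mr; lra.
have hx : forall x, w x * e x ^+ 2 <= S.
  move=> x; rewrite /S (bigD1 x) //= lerDl; apply: sumr_ge0 => y _.
  by apply: mulr_ge0; [apply: ltW | apply: sqr_ge0].
have hM : 4 * (Mr * eps ^+ 2) <= u ^+ 2.
  rewrite -epsu; have : 0 <= eps ^+ 2 by apply: sqr_ge0.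
  move=> h; have : 0 <= eps ^+ 2 * (Mr - 1) * Mr by apply: mulr_ge0; [apply: mulr_ge0|]; lra.
  nra.
have hg : forall x, 0 <= g x <= 1.
  move=> x.
  have h1 : u * (w x * e x ^+ 2) <= u * (u / 4).
    have := hx x; have := hS; have : 0 <= u by lra.
    move=> hu hS' hxx; have := ler_wpM2l hu hxx; lra.
  rewrite ler_pM2l // in h1.
  have h2 : e x ^+ 2 <= 1 / 4.
    have := hw x; have := hwpos x => hw0 hwu.
    rewrite -(ler_pM2l hw0); lra.
  rewrite /e in h2; apply/andP; split; nra.
pose Q : {ffun outcome m p -> R} :=
  [ffun t : outcome m p => if t.2 then w t.1 * g t.1 else w t.1 * (1 - g t.1)].
have sumall : forall F : outcome m p -> R,
    \sum_(t : outcome m p) F t = \sum_(x : X) (F (x, true) + F (x, false)).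
  move=> F; exact: (@sum_pairC R m p F xpredT).
have hT : forall i a, \sum_(x : X | x i == a) w x * g x = \sum_(x : X | x i == a) P (x, true).
  move=> i a; rewrite -!(@sum_ind R X (fun x : X => x i == a)).
  exact: (hf' (i, a)).
exists Q; split; [split; [split|split] | ].
- move=> [x b]; rewrite ffunE /=; have := hg x; have := hwpos x.
  case: b => /= hw0 /andP [hg0 hg1]; apply: mulr_ge0; lra.
- rewrite sumall -P1 sumall; apply: eq_bigr => x _; rewrite !ffunE /= /w; ring.
- move=> i j a b; rewrite /margXX.
  rewrite (@sum_pairC R m p Q (fun x => (x i == a) && (x j == b))).
  rewrite (@sum_pairC R m p P (fun x => (x i == a) && (x j == b))).
  by apply: eq_bigr => x _; rewrite !ffunE /= /w; ring.
- move=> i a y; rewrite /margXY.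
  rewrite (@sum_pairY R m p Q (fun x => x i == a)) (@sum_pairY R m p P (fun x => x i == a)).
  case: y.
    by rewrite -hT; apply: eq_bigr => x _; rewrite ffunE.
  transitivity (\sum_(x : X | x i == a) w x - \sum_(x : X | x i == a) w x * g x).
    by rewrite -sumrB; apply: eq_bigr => x _; rewrite ffunE /=; ring.
  rewrite hT -sumrB; apply: eq_bigr => x _; rewrite /w; ring.
- exists (fun i a => f (i, a)) => x; rewrite /margX !ffunE /= => _.
  have -> : w x * (1 - g x) + w x * g x = w x by ring.
  by rewrite mulrAC divff ?mul1r // lt0r_neq0.
Qed.
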